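(* In the isotropic setting below, let $F\in\mathrm{GL}^+(3)$ be fixed and $t\mapsto C_p(t)\in\mathrm{PSym}(3)$ be differentiable. Put $F_p(t)=\sqrt{C_p(t)}$, $F_e=FF_p^{-1}$, $B_e=F_eF_e^T=FC_p^{-1}F^T$, $\tau_e=DW(F_e)F_e^T$. Then $$\frac{d}{dt}\widetilde W\big(CC_p^{-1}(t)\big)=\frac12\Big\langle\tau_e,\;F\,\frac{d}{dt}[C_p^{-1}]\,F^T B_e^{-1}\Big\rangle.$$ If moreover at time $t$ one has $\mathrm{dev}_3\tau_e\neq0$ and the Simo–Miehe flow rule $\frac{d}{dt}[C_p^{-1}]=-2\lambda\,F^{-1}\big[\frac{\mathrm{dev}_3\tau_e}{\|\mathrm{dev}_3\tau_e\|}B_e\big]F^{-T}$ with $\lambda\ge0$, then $$\frac{d}{dt}\widetilde W\big(CC_p^{-1}(t)\big)=-\lambda\,\|\mathrm{dev}_3\tau_e\|\le0.$$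
   Context: $W:\mathrm{GL}^+(3)\to\mathbb{R}$ objective and isotropic ($W(QFR)=W(F)$, $Q,R\in\mathrm{SO}(3)$), written $W(F_e)=\Psi(I_1(C_e),I_2(C_e),I_3(C_e))$ with $\Psi\in C^1$, $C_e=F_e^TF_e$; $\widetilde W(X)=\Psi(\mathrm{tr}X,\mathrm{tr}(\mathrm{Cof}X),\det X)$, so that $W(F_e)=\widetilde W(CC_p^{-1})$ with $C=F^TF$. $\langle X,Y\rangle=\mathrm{tr}(XY^T)$, $\|\cdot\|$ Frobenius norm, $DW$ gradient, $\mathrm{dev}_3X=X-\frac13\mathrm{tr}(X)\mathbb{1}$. For isotropic $W$, $\tau_e$ is symmetric and commutes with $B_e$. *)

(* Defs.v *)
(* classical reals (derivatives needed). 3x3 real matrices are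
   represented as functions nat -> nat -> R, only entries i,j < 3 matter. *)
From Stdlib Require Export Reals.
Open Scope R_scope.

Definition Mat3 := nat -> nat -> R.

Definition mat_eq (A B : Mat3) : Prop :=
  forall i j : nat, (i < 3)%nat -> (j < 3)%nat -> A i j = B i j.

Definition idm : Mat3 := fun i j => if Nat.eqb i j then 1 else 0.
Definition madd (A B : Mat3) : Mat3 := fun i j => A i j + B i j.
Definition mscal (a : R) (A : Mat3) : Mat3 := fun i j => a * A i j.
Definition mtr (A : Mat3) : Mat3 := fun i j => A j i.
Definition mmul (A B : Mat3) : Mat3 :=
  fun i j => A i 0%nat * B 0%nat j + A i 1%nat * B 1%nat j + A i 2%nat * B 2%nat j.
Definition trace (A : Mat3) : R := A 0%nat 0%nat + A 1%nat 1%nat + A 2%nat 2%nat.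
Definition det3 (A : Mat3) : R :=
    A 0%nat 0%nat * (A 1%nat 1%nat * A 2%nat 2%nat - A 1%nat 2%nat * A 2%nat 1%nat)
  - A 0%nat 1%nat * (A 1%nat 0%nat * A 2%nat 2%nat - A 1%nat 2%nat * A 2%nat 0%nat)
  + A 0%nat 2%nat * (A 1%nat 0%nat * A 2%nat 1%nat - A 1%nat 1%nat * A 2%nat 0%nat).
(* cofactor matrix (signed minors), cyclic formula valid for 3x3 *)
Definition cof (A : Mat3) : Mat3 := fun i j =>
  A ((i+1) mod 3)%nat ((j+1) mod 3)%nat * A ((i+2) mod 3)%nat ((j+2) mod 3)%nat
  - A ((i+1) mod 3)%nat ((j+2) mod 3)%nat * A ((i+2) mod 3)%nat ((j+1) mod 3)%nat.
Definition minv (A : Mat3) : Mat3 := mscal (/ det3 A) (mtr (cof A)).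

Definition inner (X Y : Mat3) : R := trace (mmul X (mtr Y)).
Definition fnorm (X : Mat3) : R := sqrt (inner X X).
Definition dev3 (X : Mat3) : Mat3 := madd X (mscal (- (trace X / 3)) idm).

Definition symmetric (A : Mat3) : Prop := mat_eq (mtr A) A.
Definition psym (A : Mat3) : Prop :=
  symmetric A /\
  forall x : nat -> R, (x 0%nat <> 0 \/ x 1%nat <> 0 \/ x 2%nat <> 0) ->
    0 < (x 0%nat * (A 0%nat 0%nat * x 0%nat + A 0%nat 1%nat * x 1%nat + A 0%nat 2%nat * x 2%nat)
       + x 1%nat * (A 1%nat 0%nat * x 0%nat + A 1%nat 1%nat * x 1%nat + A 1%nat 2%nat * x 2%nat)
       + x 2%nat * (A 2%nat 0%nat * x 0%nat + A 2%nat 1%nat * x 1%nat + A 2%nat 2%nat * x 2%nat)).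

Definition mderiv_at (M : R -> Mat3) (t : R) (D : Mat3) : Prop :=
  forall i j : nat, (i < 3)%nat -> (j < 3)%nat ->
    derivable_pt_lim (fun s => M s i j) t (D i j).
Definition mdifferentiable (M : R -> Mat3) : Prop :=
  forall t i j, (i < 3)%nat -> (j < 3)%nat -> exists l, derivable_pt_lim (fun s => M s i j) t l.

Definition cont3_at (f : R -> R -> R -> R) (a b c : R) : Prop :=
  forall eps, 0 < eps -> exists delta, 0 < delta /\
    forall x y z, Rabs (x - a) < delta -> Rabs (y - b) < delta -> Rabs (z - c) < delta ->
      Rabs (f x y z - f a b c) < eps.

(* Psi is C^1 on the open positive octant (where the invariants of
   positive definite tensors live): continuous partial derivatives. *)
Definition C1_pos (Psi : R -> R -> R -> R) : Prop :=
  exists d1 d2 d3 : R -> R -> R -> R,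
    forall a b c, 0 < a -> 0 < b -> 0 < c ->
      derivable_pt_lim (fun x => Psi x b c) a (d1 a b c) /\
      derivable_pt_lim (fun y => Psi a y c) b (d2 a b c) /\
      derivable_pt_lim (fun z => Psi a b z) c (d3 a b c) /\
      cont3_at d1 a b c /\ cont3_at d2 a b c /\ cont3_at d3 a b c.

(* W(F) = Psi(I1(C), I2(C), I3(C)), C = F^T F;  Wt(X) = Psi(tr X, tr Cof X, det X) *)
Definition Wt (Psi : R -> R -> R -> R) (X : Mat3) : R :=
  Psi (trace X) (trace (cof X)) (det3 X).
Definition Wof (Psi : R -> R -> R -> R) (F : Mat3) : R := Wt Psi (mmul (mtr F) F).

Definition is_gradient (W : Mat3 -> R) (X G : Mat3) : Prop :=
  forall eps, 0 < eps -> exists delta, 0 < delta /\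
    forall H : Mat3, fnorm H < delta ->
      Rabs (W (madd X H) - W X - inner G H) <= eps * fnorm H.

(* Main.v *)
Require Import Defs.
From Stdlib Require Import Reals Lra Lia Psatz FunctionalExtensionality Classical Bool.
Open Scope R_scope.

Ltac fext := let i := fresh "i" in let j := fresh "j" in
  apply functional_extensionality; intro i; apply functional_extensionality; intro j.

Ltac d3 i := let H := fresh in
  destruct i as [|[|[|i]]]; [ | | | exfalso; lia ].

Ltac meq := let i := fresh "i" in let j := fresh "j" in
  let Hi := fresh "Hi" in let Hj := fresh "Hj" in
  intros i j Hi Hj; d3 i; d3 j.

Lemma mat_eq_refl A : mat_eq A A. Proof. intros i j _ _; reflexivity. Qed.
Lemma mat_eq_sym A B : mat_eq A B -> mat_eq B A. Proof. intros H i j Hi Hj; symmetry; auto. Qed.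
Lemma mat_eq_trans A B C : mat_eq A B -> mat_eq B C -> mat_eq A C.
Proof. intros H1 H2 i j Hi Hj; rewrite H1, H2; auto. Qed.

Lemma mmul_compat A A' B B' : mat_eq A A' -> mat_eq B B' -> mat_eq (mmul A B) (mmul A' B').
Proof. intros H1 H2 i j Hi Hj; unfold mmul; rewrite !H1, !H2 by lia; reflexivity. Qed.
Lemma madd_compat A A' B B' : mat_eq A A' -> mat_eq B B' -> mat_eq (madd A B) (madd A' B').
Proof. intros H1 H2 i j Hi Hj; unfold madd; rewrite !H1, !H2 by lia; reflexivity. Qed.
Lemma mscal_compat a A A' : mat_eq A A' -> mat_eq (mscal a A) (mscal a A').
Proof. intros H1 i j Hi Hj; unfold mscal; rewrite !H1 by lia; reflexivity. Qed.
Lemma mtr_compat A A' : mat_eq A A' -> mat_eq (mtr A) (mtr A').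
Proof. intros H1 i j Hi Hj; unfold mtr; rewrite !H1 by lia; reflexivity. Qed.
Lemma trace_compat A A' : mat_eq A A' -> trace A = trace A'.
Proof. intros H1; unfold trace; rewrite !H1 by lia; reflexivity. Qed.
Lemma det3_compat A A' : mat_eq A A' -> det3 A = det3 A'.
Proof. intros H1; unfold det3; rewrite !H1 by lia; reflexivity. Qed.
Lemma cof_compat A A' : mat_eq A A' -> mat_eq (cof A) (cof A').
Proof.
  intros H1 i j Hi Hj; unfold cof.
  rewrite !H1 by (apply Nat.mod_upper_bound; lia); reflexivity.
Qed.
Lemma minv_compat A A' : mat_eq A A' -> mat_eq (minv A) (minv A').
Proof.
  intros H; unfold minv; rewrite (det3_compat _ _ H).
  apply mscal_compat, mtr_compat, cof_compat, H.
Qed.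
Lemma inner_compat A A' B B' : mat_eq A A' -> mat_eq B B' -> inner A B = inner A' B'.
Proof. intros; unfold inner; apply trace_compat, mmul_compat; auto using mtr_compat. Qed.
Lemma Wt_compat Psi A A' : mat_eq A A' -> Wt Psi A = Wt Psi A'.
Proof. intros H; unfold Wt; rewrite (trace_compat _ _ H), (det3_compat _ _ H),
  (trace_compat _ _ (cof_compat _ _ H)); reflexivity. Qed.
Lemma Wof_compat Psi A A' : mat_eq A A' -> Wof Psi A = Wof Psi A'.
Proof. intros H; unfold Wof; apply Wt_compat, mmul_compat; auto using mtr_compat. Qed.

Lemma mmul_assoc A B C : mmul (mmul A B) C = mmul A (mmul B C).
Proof. fext; unfold mmul; ring. Qed.
Lemma mtr_mmul A B : mtr (mmul A B) = mmul (mtr B) (mtr A).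
Proof. fext; unfold mtr, mmul; ring. Qed.
Lemma mtr_mtr A : mtr (mtr A) = A.
Proof. fext; reflexivity. Qed.
Lemma trace_comm A B : trace (mmul A B) = trace (mmul B A).
Proof. unfold trace, mmul; ring. Qed.
Lemma det3_mul A B : det3 (mmul A B) = det3 A * det3 B.
Proof. unfold det3, mmul; ring. Qed.
Lemma det3_tr A : det3 (mtr A) = det3 A.
Proof. unfold det3, mtr; ring. Qed.
Lemma trcof_comm A B : trace (cof (mmul A B)) = trace (cof (mmul B A)).
Proof. unfold trace, cof, mmul; simpl; ring. Qed.
Lemma Wt_comm Psi A B : Wt Psi (mmul A B) = Wt Psi (mmul B A).
Proof. unfold Wt; rewrite trace_comm, trcof_comm, !det3_mul; f_equal; ring. Qed.
Lemma cof_tr A : cof (mtr A) = mtr (cof A).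
Proof. fext; unfold cof, mtr; ring. Qed.
Lemma minv_tr A : minv (mtr A) = mtr (minv A).
Proof. unfold minv; rewrite det3_tr, cof_tr; fext; reflexivity. Qed.
Lemma det3_cof A : det3 (cof A) = det3 A ^ 2.
Proof. unfold det3, cof; simpl; ring. Qed.
Lemma det3_minv A : det3 A <> 0 -> det3 (minv A) = / det3 A.
Proof.
  intros H. unfold minv.
  replace (det3 (mscal (/ det3 A) (mtr (cof A)))) with ((/det3 A)^3 * det3 (mtr (cof A)))
    by (unfold det3, mscal; ring).
  rewrite det3_tr, det3_cof. field; auto.
Qed.

Lemma minv_l A : det3 A <> 0 -> mat_eq (mmul (minv A) A) idm.
Proof.
  intros H; meq; unfold mmul, minv, mscal, mtr, cof, idm; simpl;
  unfold det3 in *; field; auto.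
Qed.
Lemma minv_r A : det3 A <> 0 -> mat_eq (mmul A (minv A)) idm.
Proof.
  intros H; meq; unfold mmul, minv, mscal, mtr, cof, idm; simpl;
  unfold det3 in *; field; auto.
Qed.
Lemma mmul_idm_l A : mat_eq (mmul idm A) A.
Proof. meq; unfold mmul, idm; simpl; ring. Qed.
Lemma mmul_idm_r A : mat_eq (mmul A idm) A.
Proof. meq; unfold mmul, idm; simpl; ring. Qed.
Lemma mtr_idm : mtr idm = idm.
Proof. fext; unfold mtr, idm; rewrite Nat.eqb_sym; reflexivity. Qed.
Lemma inner_sum A B : inner A B =
  A 0%nat 0%nat * B 0%nat 0%nat + A 0%nat 1%nat * B 0%nat 1%nat + A 0%nat 2%nat * B 0%nat 2%nat +
  A 1%nat 0%nat * B 1%nat 0%nat + A 1%nat 1%nat * B 1%nat 1%nat + A 1%nat 2%nat * B 1%nat 2%nat +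
  A 2%nat 0%nat * B 2%nat 0%nat + A 2%nat 1%nat * B 2%nat 1%nat + A 2%nat 2%nat * B 2%nat 2%nat.
Proof. unfold inner, trace, mmul, mtr; ring. Qed.

Definition vec3 (a b c : R) : nat -> R := fun i => match i with 0%nat => a | 1%nat => b | _ => c end.

Lemma psym_det A : psym A -> det3 A <> 0.
Proof.
  intros [Hs Hp] Hd.
  set (p := A 0%nat 1%nat * A 1%nat 2%nat - A 0%nat 2%nat * A 1%nat 1%nat).
  assert (Hq := Hp (vec3 (cof A 2%nat 0%nat) (cof A 2%nat 1%nat) (cof A 2%nat 2%nat))).
  assert (Hc : cof A 2%nat 2%nat = 0).
  { destruct (Req_dec (cof A 2%nat 2%nat) 0) as [E|E]; auto.
    exfalso. assert (H := Hq (or_intror (or_intror E))). simpl in H.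
    match type of H with 0 < ?e => assert (EE : e = cof A 2%nat 2%nat * det3 A)
      by (unfold cof, det3; simpl; ring) end.
    rewrite EE, Hd in H; lra. }
  assert (H0 : A 0%nat 0%nat = 0).
  { destruct (Req_dec (A 0%nat 0%nat) 0) as [E|E]; auto.
    exfalso. assert (Hx : vec3 (A 0%nat 1%nat) (- A 0%nat 0%nat) 0 1 <> 0).
    { simpl. intro h; apply E; lra. }
    assert (H := Hp (vec3 (A 0%nat 1%nat) (- A 0%nat 0%nat) 0) (or_intror (or_introl Hx))). simpl in H.
    match type of H with 0 < ?e => assert (EE : e = A 0%nat 0%nat * cof A 2%nat 2%nat)
      by (unfold cof; simpl; ring) end.
    rewrite EE, Hc in H; lra. }
  assert (Hx : vec3 1 0 0 0 <> 0) by (simpl; lra).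
  assert (H := Hp (vec3 1 0 0) (or_introl Hx)). simpl in H. lra.
Qed.

Definition sum9 (f : nat -> nat -> R) : R :=
  f 0%nat 0%nat + f 0%nat 1%nat + f 0%nat 2%nat + f 1%nat 0%nat + f 1%nat 1%nat + f 1%nat 2%nat +
  f 2%nat 0%nat + f 2%nat 1%nat + f 2%nat 2%nat.

Lemma inner_sum9 A B : inner A B = sum9 (fun i j => A i j * B i j).
Proof. rewrite inner_sum; unfold sum9; ring. Qed.

Lemma sum9_le f g : (forall i j, (i<3)%nat -> (j<3)%nat -> f i j <= g i j) -> sum9 f <= sum9 g.
Proof. intros H; unfold sum9; repeat apply Rplus_le_compat; apply H; lia. Qed.

Lemma sum9_abs f : Rabs (sum9 f) <= sum9 (fun i j => Rabs (f i j)).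
Proof.
  unfold sum9. repeat (eapply Rle_trans; [apply Rabs_triang|]; apply Rplus_le_compat; [|apply Rle_refl]).
  apply Rle_refl.
Qed.

Lemma sum9_scal c f : sum9 (fun i j => c * f i j) = c * sum9 f.
Proof. unfold sum9; ring. Qed.

Lemma sum9_nonneg f : (forall i j, (i<3)%nat -> (j<3)%nat -> 0 <= f i j) -> 0 <= sum9 f.
Proof. intros H. replace 0 with (sum9 (fun _ _ => 0)) by (unfold sum9; ring). apply sum9_le; auto. Qed.

Lemma sq_sum9 (f : nat -> nat -> R) : (forall i j, 0 <= f i j) ->
  sum9 (fun i j => f i j * f i j) <= sum9 f * sum9 f.
Proof.
  intros H; unfold sum9.
  pose proof (H 0%nat 0%nat); pose proof (H 0%nat 1%nat); pose proof (H 0%nat 2%nat);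
  pose proof (H 1%nat 0%nat); pose proof (H 1%nat 1%nat); pose proof (H 1%nat 2%nat);
  pose proof (H 2%nat 0%nat); pose proof (H 2%nat 1%nat); pose proof (H 2%nat 2%nat).
  nra.
Qed.

Lemma fnorm_le A : fnorm A <= sum9 (fun i j => Rabs (A i j)).
Proof.
  unfold fnorm. rewrite inner_sum9.
  assert (E : sum9 (fun i j => A i j * A i j) = sum9 (fun i j => Rabs (A i j) * Rabs (A i j))).
  { unfold sum9; rewrite <- !Rabs_mult, !Rabs_right; try reflexivity;
    apply Rle_ge; apply Rle_0_sqr. }
  rewrite E.
  assert (0 <= sum9 (fun i j => Rabs (A i j))) by (apply sum9_nonneg; intros; apply Rabs_pos).
  rewrite <- (sqrt_square (sum9 (fun i j => Rabs (A i j)))) by auto.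
  apply sqrt_le_1_alt. apply sq_sum9. intros; apply Rabs_pos.
Qed.

Lemma all9 (P : nat -> nat -> R -> Prop) :
  (forall i j, (i<3)%nat -> (j<3)%nat -> exists d, 0 < d /\ forall h, Rabs h < d -> P i j h) ->
  exists d, 0 < d /\ forall h, Rabs h < d -> forall i j, (i<3)%nat -> (j<3)%nat -> P i j h.
Proof.
  intros H.
  destruct (H 0%nat 0%nat ltac:(lia) ltac:(lia)) as [d00 [p00 H00]].
  destruct (H 0%nat 1%nat ltac:(lia) ltac:(lia)) as [d01 [p01 H01]].
  destruct (H 0%nat 2%nat ltac:(lia) ltac:(lia)) as [d02 [p02 H02]].
  destruct (H 1%nat 0%nat ltac:(lia) ltac:(lia)) as [d10 [p10 H10]].
  destruct (H 1%nat 1%nat ltac:(lia) ltac:(lia)) as [d11 [p11 H11]].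
  destruct (H 1%nat 2%nat ltac:(lia) ltac:(lia)) as [d12 [p12 H12]].
  destruct (H 2%nat 0%nat ltac:(lia) ltac:(lia)) as [d20 [p20 H20]].
  destruct (H 2%nat 1%nat ltac:(lia) ltac:(lia)) as [d21 [p21 H21]].
  destruct (H 2%nat 2%nat ltac:(lia) ltac:(lia)) as [d22 [p22 H22]].
  exists (Rmin d00 (Rmin d01 (Rmin d02 (Rmin d10 (Rmin d11 (Rmin d12 (Rmin d20 (Rmin d21 d22)))))))).
  split.
  { repeat apply Rmin_pos; auto. }
  intros h Hh i j Hi Hj.
  repeat (match type of Hh with Rabs h < Rmin ?a ?b =>
     let X := fresh in let Y := fresh in
     assert (X : Rabs h < a) by (eapply Rlt_le_trans; [exact Hh | apply Rmin_l]);
     assert (Y : Rabs h < b) by (eapply Rlt_le_trans; [exact Hh | apply Rmin_r]); clear Hh; rename Y into Hh end).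
  d3 i; d3 j; auto.
Qed.

Lemma dl_lin f t l : derivable_pt_lim f t l ->
  forall e, 0 < e -> exists d, 0 < d /\ forall h, Rabs h < d -> Rabs (f (t + h) - f t - l * h) <= e * Rabs h.
Proof.
  intros H e He. destruct (H e He) as [d Hd]. exists d; split; [apply cond_pos|].
  intros h Hh. destruct (Req_dec h 0) as [->|Hn].
  { rewrite Rplus_0_r. replace (f t - f t - l * 0) with 0 by ring. rewrite Rabs_R0. lra. }
  assert (X := Hd h Hn Hh).
  replace (f (t + h) - f t - l * h) with (((f (t + h) - f t) / h - l) * h) by (field; auto).
  rewrite Rabs_mult. apply Rmult_le_compat_r; [apply Rabs_pos| lra].
Qed.

Lemma dl_cont f t l : derivable_pt_lim f t l ->
  forall e, 0 < e -> exists d, 0 < d /\ forall s, Rabs (s - t) < d -> Rabs (f s - f t) < e.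
Proof.
  intros H e He.
  destruct (dl_lin f t l H 1 ltac:(lra)) as [d [Hd Hf]].
  exists (Rmin d (e / (Rabs l + 2))).
  split. { apply Rmin_pos; auto. apply Rdiv_lt_0_compat; auto. pose proof (Rabs_pos l); lra. }
  intros s Hs.
  assert (H1 : Rabs (s - t) < d) by (eapply Rlt_le_trans; [exact Hs|apply Rmin_l]).
  assert (H2 : Rabs (s - t) < e / (Rabs l + 2)) by (eapply Rlt_le_trans; [exact Hs|apply Rmin_r]).
  assert (X := Hf (s - t) H1). replace (t + (s - t)) with s in X by ring.
  assert (Y : Rabs (f s - f t) <= (Rabs l + 1) * Rabs (s - t)).
  { replace (f s - f t) with ((f s - f t - l * (s - t)) + l * (s - t)) by ring.
    eapply Rle_trans; [apply Rabs_triang|]. rewrite Rabs_mult. lra. }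
  assert (Z : (Rabs l + 2) * Rabs (s - t) < e).
  { pose proof (Rabs_pos l). apply Rmult_lt_compat_l with (r := Rabs l + 2) in H2; [|lra].
    replace ((Rabs l + 2) * (e / (Rabs l + 2))) with e in H2 by (field; lra). lra. }
  pose proof (Rabs_pos (s - t)). nra.
Qed.

Lemma grad_chain (W : Mat3 -> R) X0 G (Hc : forall X Y, mat_eq X Y -> W X = W Y)
  (HG : is_gradient W X0 G) (H : R -> Mat3) Hd t (g : R -> R) d0 :
  0 < d0 -> (forall s, Rabs (s - t) < d0 -> g s = W (madd X0 (H s))) ->
  mat_eq (H t) (fun _ _ => 0) -> mderiv_at H t Hd ->
  derivable_pt_lim g t (inner G Hd).
Proof.
  intros Hd0 Hg Ht Hder eps Heps.
  set (SG := sum9 (fun i j => Rabs (G i j))).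
  set (K := sum9 (fun i j => Rabs (Hd i j) + 1)).
  assert (SG0 : 0 <= SG) by (apply sum9_nonneg; intros; apply Rabs_pos).
  assert (K0 : 9 <= K).
  { unfold K, sum9. repeat match goal with |- context [Rabs ?x] =>
      let h := fresh in pose proof (Rabs_pos x) as h; revert h; generalize (Rabs x); intros end. lra. }
  set (e := Rmin 1 (eps / (4 * (SG + 1)))).
  assert (He : 0 < e) by (apply Rmin_pos; [lra|apply Rdiv_lt_0_compat; lra]).
  assert (He1 : e <= 1) by apply Rmin_l.
  assert (He2 : e * SG <= eps / 4).
  { assert (e <= eps / (4 * (SG + 1))) by apply Rmin_r.
    assert (e * (SG + 1) <= eps / 4).
    { apply Rmult_le_compat_r with (r := SG + 1) in H0; [|lra].
      replace (eps / (4 * (SG + 1)) * (SG + 1)) with (eps / 4) in H0 by (field; lra). lra. }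
    nra. }
  destruct (all9 (fun i j h => Rabs (H (t + h) i j - H t i j - Hd i j * h) <= e * Rabs h))
    as [d1 [Hd1 E1]].
  { intros i j Hi Hj. exact (dl_lin (fun s => H s i j) t (Hd i j) (Hder i j Hi Hj) e He). }
  destruct (HG (eps / (4 * K)) ltac:(apply Rdiv_lt_0_compat; lra)) as [dg [Hdg Eg]].
  assert (d2 : 0 < dg / K) by (apply Rdiv_lt_0_compat; lra).
  exists (mkposreal _ (Rmin_pos _ _ Hd1 (Rmin_pos _ _ Hd0 d2))). simpl.
  intros h Hh0 Hh.
  assert (Ha : Rabs h < d1) by (eapply Rlt_le_trans; [exact Hh|apply Rmin_l]).
  assert (Hb : Rabs h < d0) by (eapply Rlt_le_trans; [exact Hh|]; eapply Rle_trans; [apply Rmin_r|apply Rmin_l]).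
  assert (Hc' : Rabs h < dg / K) by (eapply Rlt_le_trans; [exact Hh|]; eapply Rle_trans; [apply Rmin_r|apply Rmin_r]).
  assert (Eh := E1 h Ha).
  rewrite (Hg (t + h)) by (replace (t + h - t) with h by ring; auto).
  rewrite (Hg t) by (replace (t - t) with 0 by ring; rewrite Rabs_R0; auto).
  rewrite (Hc (madd X0 (H t)) X0).
  2:{ intros i j Hi Hj. unfold madd. rewrite Ht by auto. ring. }
  set (Hh1 := H (t + h)).
  assert (EHt : forall i j, (i<3)%nat -> (j<3)%nat -> H t i j = 0) by (intros; apply Ht; auto).
  assert (Bn : fnorm Hh1 <= K * Rabs h).
  { eapply Rle_trans; [apply fnorm_le|].
    unfold K. rewrite Rmult_comm, <- sum9_scal. apply sum9_le. intros i j Hi Hj.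
    assert (X := Eh i j Hi Hj). rewrite EHt in X by auto.
    replace (Hh1 i j) with ((H (t + h) i j - 0 - Hd i j * h) + Hd i j * h) by (unfold Hh1; ring).
    eapply Rle_trans; [apply Rabs_triang|]. rewrite Rabs_mult.
    pose proof (Rabs_pos h). nra. }
  assert (Bn2 : fnorm Hh1 < dg).
  { assert (K * Rabs h < dg).
    { apply Rmult_lt_compat_l with (r := K) in Hc'; [|lra].
      replace (K * (dg / K)) with dg in Hc' by (field; lra). lra. }
    lra. }
  assert (EG := Eg Hh1 Bn2).
  assert (EI : Rabs (inner G Hh1 - inner G Hd * h) <= eps / 4 * Rabs h).
  { rewrite !inner_sum9.
    replace (sum9 (fun i j => G i j * Hh1 i j) - sum9 (fun i j => G i j * Hd i j) * h)
      with (sum9 (fun i j => G i j * (Hh1 i j - Hd i j * h))) by (unfold sum9; ring).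
    eapply Rle_trans; [apply sum9_abs|].
    eapply Rle_trans with (sum9 (fun i j => Rabs (G i j) * (e * Rabs h))).
    { apply sum9_le. intros i j Hi Hj. rewrite Rabs_mult. apply Rmult_le_compat_l; [apply Rabs_pos|].
      assert (X := Eh i j Hi Hj). rewrite EHt in X by auto. unfold Hh1.
      replace (H (t + h) i j - Hd i j * h) with (H (t + h) i j - 0 - Hd i j * h) by ring. exact X. }
    replace (sum9 (fun i j => Rabs (G i j) * (e * Rabs h))) with (SG * e * Rabs h) by (unfold SG, sum9; ring).
    pose proof (Rabs_pos h). nra. }
  assert (EW : Rabs (W (madd X0 Hh1) - W X0 - inner G Hd * h) <= eps / 2 * Rabs h).
  { replace (W (madd X0 Hh1) - W X0 - inner G Hd * h) with
      ((W (madd X0 Hh1) - W X0 - inner G Hh1) + (inner G Hh1 - inner G Hd * h)) by ring.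
    eapply Rle_trans; [apply Rabs_triang|].
    assert (eps / (4 * K) * fnorm Hh1 <= eps / 4 * Rabs h).
    { replace (eps / 4 * Rabs h) with (eps / (4 * K) * (K * Rabs h)) by (field; lra).
      apply Rmult_le_compat_l; auto. apply Rlt_le, Rdiv_lt_0_compat; lra. }
    lra. }
  replace ((W (madd X0 Hh1) - W X0) / h - inner G Hd) with
    ((W (madd X0 Hh1) - W X0 - inner G Hd * h) / h) by (field; auto).
  unfold Rdiv. rewrite Rabs_mult, Rabs_inv.
  assert (0 < Rabs h) by (apply Rabs_pos_lt; auto).
  apply Rmult_le_compat_r with (r := / Rabs h) in EW; [|apply Rlt_le, Rinv_0_lt_compat; auto].
  replace (eps / 2 * Rabs h * / Rabs h) with (eps / 2) in EW by (field; lra). lra.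
Qed.

Lemma dl_plus f g t a b : derivable_pt_lim f t a -> derivable_pt_lim g t b ->
  derivable_pt_lim (fun s => f s + g s) t (a + b).
Proof. intros; apply (derivable_pt_lim_plus f g); auto. Qed.
Lemma dl_minus f g t a b : derivable_pt_lim f t a -> derivable_pt_lim g t b ->
  derivable_pt_lim (fun s => f s - g s) t (a - b).
Proof. intros; apply (derivable_pt_lim_minus f g); auto. Qed.
Lemma dl_scal c f t a : derivable_pt_lim f t a -> derivable_pt_lim (fun s => c * f s) t (c * a).
Proof. intros; apply (derivable_pt_lim_scal f); auto. Qed.
Lemma dl_scalr c f t a : derivable_pt_lim f t a -> derivable_pt_lim (fun s => f s * c) t (a * c).
Proof. intros H. rewrite Rmult_comm. eapply derivable_pt_lim_ext with (f := fun s => c * f s).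
  - intros; ring.
  - apply dl_scal; auto. Qed.
Lemma dl_const c t : derivable_pt_lim (fun _ => c) t 0.
Proof. apply derivable_pt_lim_const. Qed.
Lemma dl_mult f g t a b : derivable_pt_lim f t a -> derivable_pt_lim g t b ->
  derivable_pt_lim (fun s => f s * g s) t (a * g t + f t * b).
Proof. intros; apply (derivable_pt_lim_mult f g); auto. Qed.
Lemma dl_eqv f t a b : derivable_pt_lim f t a -> a = b -> derivable_pt_lim f t b.
Proof. intros H ->; auto. Qed.

Lemma mderiv_lmul A D t Dd : mderiv_at D t Dd ->
  mderiv_at (fun s => mmul A (D s)) t (mmul A Dd).
Proof.
  intros H i j Hi Hj. unfold mmul.
  repeat apply dl_plus; apply dl_scal; apply H; auto.
Qed.
Lemma mderiv_rmul A D t Dd : mderiv_at D t Dd ->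
  mderiv_at (fun s => mmul (D s) A) t (mmul Dd A).
Proof.
  intros H i j Hi Hj. unfold mmul.
  repeat apply dl_plus; apply dl_scalr; apply H; auto.
Qed.
Lemma mderiv_subI Q t Qd : mderiv_at Q t Qd ->
  mderiv_at (fun s => madd (Q s) (mscal (-1) idm)) t Qd.
Proof.
  intros H i j Hi Hj. unfold madd, mscal.
  apply dl_eqv with (Qd i j + 0); [|ring]. apply dl_plus; [apply H; auto| apply dl_const].
Qed.

Lemma dl_sqrt1 f t a : derivable_pt_lim f t a -> f t = 1 ->
  derivable_pt_lim (fun s => sqrt (f s)) t (a / 2).
Proof.
  intros H H1.
  assert (X := derivable_pt_lim_comp f sqrt t a _ H (derivable_pt_lim_sqrt (f t) ltac:(lra))).
  rewrite H1, sqrt_1 in X. unfold comp in X.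
  replace (a / 2) with (/ (2 * 1) * a) by field. exact X.
Qed.

Lemma dl_div10 f g t a b : derivable_pt_lim f t a -> derivable_pt_lim g t b ->
  f t = 0 -> g t = 1 -> derivable_pt_lim (fun s => f s / g s) t a.
Proof.
  intros H1 H2 E1 E2.
  assert (X := derivable_pt_lim_div f g t a b H1 H2 ltac:(lra)).
  rewrite E1, E2 in X. unfold div_fct in X.
  replace a with ((a * 1 - b * 0) / Rsqr 1) by (unfold Rsqr; field). exact X.
Qed.

Lemma near_pos f t a : derivable_pt_lim f t a -> f t = 1 ->
  exists d, 0 < d /\ forall s, Rabs (s - t) < d -> 0 < f s.
Proof.
  intros H E. destruct (dl_cont f t a H (1/2) ltac:(lra)) as [d [Hd X]].
  exists d; split; auto. intros s Hs. assert (Y := X s Hs). rewrite E in Y.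
  apply Rabs_def2 in Y. lra.
Qed.

Definition chQ (n00 n10 n11 n20 n21 n22 : R -> R) (s : R) : Mat3 :=
  let l00 := sqrt (n00 s) in
  let l10 := n10 s / l00 in
  let l20 := n20 s / l00 in
  let l11 := sqrt (n11 s - l10 * l10) in
  let l21 := (n21 s - l20 * l10) / l11 in
  let l22 := sqrt (n22 s - l20 * l20 - l21 * l21) in
  fun i j => match i, j with
  | O, O => l00 | S O, O => l10 | S O, S O => l11 | S (S O), O => l20 | S (S O), S O => l21 | S (S O), S (S O) => l22
  | _, _ => 0 end.

Definition chD (a00 a10 a11 a20 a21 a22 : R) : Mat3 :=
  fun i j => match i, j with
  | O, O => a00 / 2 | S O, O => a10 | S O, S O => a11 / 2 | S (S O), O => a20 | S (S O), S O => a21 | S (S O), S (S O) => a22 / 2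
  | _, _ => 0 end.

Lemma chol n00 n10 n11 n20 n21 n22 t a00 a10 a11 a20 a21 a22 :
  derivable_pt_lim n00 t a00 -> derivable_pt_lim n10 t a10 -> derivable_pt_lim n11 t a11 ->
  derivable_pt_lim n20 t a20 -> derivable_pt_lim n21 t a21 -> derivable_pt_lim n22 t a22 ->
  n00 t = 1 -> n10 t = 0 -> n11 t = 1 -> n20 t = 0 -> n21 t = 0 -> n22 t = 1 ->
  let Q := chQ n00 n10 n11 n20 n21 n22 in
  (exists d0, 0 < d0 /\ forall s, Rabs (s - t) < d0 ->
      Q s 0%nat 0%nat * Q s 0%nat 0%nat = n00 s /\
      Q s 1%nat 0%nat * Q s 0%nat 0%nat = n10 s /\
      Q s 1%nat 0%nat * Q s 1%nat 0%nat + Q s 1%nat 1%nat * Q s 1%nat 1%nat = n11 s /\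
      Q s 2%nat 0%nat * Q s 0%nat 0%nat = n20 s /\
      Q s 2%nat 0%nat * Q s 1%nat 0%nat + Q s 2%nat 1%nat * Q s 1%nat 1%nat = n21 s /\
      Q s 2%nat 0%nat * Q s 2%nat 0%nat + Q s 2%nat 1%nat * Q s 2%nat 1%nat
        + Q s 2%nat 2%nat * Q s 2%nat 2%nat = n22 s)
  /\ mat_eq (Q t) idm
  /\ mderiv_at Q t (chD a00 a10 a11 a20 a21 a22).
Proof.
  intros D00 D10 D11 D20 D21 D22 E00 E10 E11 E20 E21 E22 Q.
  set (l00 := fun s => sqrt (n00 s)).
  set (l10 := fun s => n10 s / l00 s).
  set (l20 := fun s => n20 s / l00 s).
  set (m11 := fun s => n11 s - l10 s * l10 s).
  set (l11 := fun s => sqrt (m11 s)).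
  set (l21 := fun s => (n21 s - l20 s * l10 s) / l11 s).
  set (m22 := fun s => n22 s - l20 s * l20 s - l21 s * l21 s).
  set (l22 := fun s => sqrt (m22 s)).
  assert (V00 : l00 t = 1) by (unfold l00; rewrite E00; apply sqrt_1).
  assert (V10 : l10 t = 0) by (unfold l10; rewrite E10, V00; field).
  assert (V20 : l20 t = 0) by (unfold l20; rewrite E20, V00; field).
  assert (W11 : m11 t = 1) by (unfold m11; rewrite E11, V10; ring).
  assert (V11 : l11 t = 1) by (unfold l11; rewrite W11; apply sqrt_1).
  assert (V21 : l21 t = 0) by (unfold l21; rewrite E21, V20, V10, V11; field).
  assert (W22 : m22 t = 1) by (unfold m22; rewrite E22, V20, V21; ring).
  assert (V22 : l22 t = 1) by (unfold l22; rewrite W22; apply sqrt_1).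
  assert (G00 : derivable_pt_lim l00 t (a00 / 2)) by (apply dl_sqrt1; auto).
  assert (G10 : derivable_pt_lim l10 t a10) by (eapply dl_div10; eauto).
  assert (G20 : derivable_pt_lim l20 t a20) by (eapply dl_div10; eauto).
  assert (H11 : derivable_pt_lim m11 t a11).
  { apply dl_eqv with (a11 - (a10 * l10 t + l10 t * a10)).
    - apply dl_minus; auto. apply dl_mult; auto.
    - rewrite V10; ring. }
  assert (G11 : derivable_pt_lim l11 t (a11 / 2)) by (apply dl_sqrt1; auto).
  assert (G21 : derivable_pt_lim l21 t a21).
  { eapply dl_div10; eauto.
    - apply dl_eqv with (a21 - (a20 * l10 t + l20 t * a10)).
      + apply dl_minus; auto. apply dl_mult; auto.
      + rewrite V10, V20; ring.
    - simpl. rewrite E21, V20, V10; ring. }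
  assert (H22 : derivable_pt_lim m22 t a22).
  { apply dl_eqv with (a22 - (a20 * l20 t + l20 t * a20) - (a21 * l21 t + l21 t * a21)).
    - apply dl_minus; [apply dl_minus|]; auto; apply dl_mult; auto.
    - rewrite V20, V21; ring. }
  assert (G22 : derivable_pt_lim l22 t (a22 / 2)) by (apply dl_sqrt1; auto).
  split; [|split].
  - destruct (near_pos n00 t a00 D00 E00) as [d1 [Hd1 P1]].
    destruct (near_pos m11 t a11 H11 W11) as [d2 [Hd2 P2]].
    destruct (near_pos m22 t a22 H22 W22) as [d3 [Hd3 P3]].
    exists (Rmin d1 (Rmin d2 d3)). split; [repeat apply Rmin_pos; auto|].
    intros s Hs.
    assert (S1 : Rabs (s - t) < d1) by (eapply Rlt_le_trans; [exact Hs|apply Rmin_l]).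
    assert (S2 : Rabs (s - t) < d2) by (eapply Rlt_le_trans; [exact Hs|]; eapply Rle_trans; [apply Rmin_r|apply Rmin_l]).
    assert (S3 : Rabs (s - t) < d3) by (eapply Rlt_le_trans; [exact Hs|]; eapply Rle_trans; [apply Rmin_r|apply Rmin_r]).
    assert (Q1 := P1 s S1). assert (Q2 := P2 s S2). assert (Q3 := P3 s S3).
    change (Q s 0%nat 0%nat) with (l00 s). change (Q s 1%nat 0%nat) with (l10 s).
    change (Q s 1%nat 1%nat) with (l11 s). change (Q s 2%nat 0%nat) with (l20 s).
    change (Q s 2%nat 1%nat) with (l21 s). change (Q s 2%nat 2%nat) with (l22 s).
    assert (R00 : l00 s * l00 s = n00 s) by (unfold l00; apply sqrt_sqrt; lra).
    assert (P00 : 0 < l00 s) by (unfold l00; apply sqrt_lt_R0; lra).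
    assert (R11 : l11 s * l11 s = m11 s) by (unfold l11; apply sqrt_sqrt; lra).
    assert (P11 : 0 < l11 s) by (unfold l11; apply sqrt_lt_R0; lra).
    assert (R22 : l22 s * l22 s = m22 s) by (unfold l22; apply sqrt_sqrt; lra).
    split; [auto|]. split; [unfold l10; field; lra|].
    split; [rewrite R11; unfold m11; ring|].
    split; [unfold l20; field; lra|].
    split; [unfold l21; field; lra|].
    rewrite R22; unfold m22; ring.
  - intros i j Hi Hj; d3 i; d3 j; unfold idm; simpl;
    first [ exact V00 | exact V10 | exact V11 | exact V20 | exact V21 | exact V22 | reflexivity ].
  - intros i j Hi Hj; d3 i; d3 j; unfold chD; simpl;
    first [ exact G00 | exact G10 | exact G11 | exact G20 | exact G21 | exact G22 | apply dl_const ].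
Qed.

Local Open Scope bool_scope.
Definition rot (p q : nat) (s : R) : Mat3 := fun i j =>
  if ((i =? p) && (j =? p)) || ((i =? q) && (j =? q)) then cos s
  else if (i =? p) && (j =? q) then - sin s
  else if (i =? q) && (j =? p) then sin s else idm i j.
Definition Erot (p q : nat) : Mat3 := fun i j =>
  if (i =? p) && (j =? q) then -1 else if (i =? q) && (j =? p) then 1 else 0.

Local Open Scope R_scope.
Lemma dcos0 : derivable_pt_lim (fun s => cos s) 0 0.
Proof. replace 0 with (- sin 0) at 2 by (rewrite sin_0; ring). apply derivable_pt_lim_cos. Qed.
Lemma dsin0 : derivable_pt_lim (fun s => sin s) 0 1.
Proof. replace 1 with (cos 0) by (apply cos_0). apply derivable_pt_lim_sin. Qed.
Lemma dmsin0 : derivable_pt_lim (fun s => - sin s) 0 (-1).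
Proof. apply (derivable_pt_lim_opp sin). apply dsin0. Qed.

Lemma rot_orth p q s : (p = 0 /\ q = 1 \/ p = 0 /\ q = 2 \/ p = 1 /\ q = 2)%nat ->
  mat_eq (mmul (rot p q s) (mtr (rot p q s))) idm.
Proof.
  intros Hpq. pose proof (sin2_cos2 s) as E. unfold Rsqr in E.
  destruct Hpq as [[-> ->]|[[-> ->]|[-> ->]]]; meq; unfold mmul, mtr, rot, idm; simpl; nra.
Qed.

Lemma rot_deriv p q : (p = 0 /\ q = 1 \/ p = 0 /\ q = 2 \/ p = 1 /\ q = 2)%nat ->
  mderiv_at (rot p q) 0 (Erot p q).
Proof.
  intros Hpq.
  destruct Hpq as [[-> ->]|[[-> ->]|[-> ->]]]; intros i j Hi Hj; d3 i; d3 j; unfold rot, Erot, idm; simpl;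
  first [apply dcos0 | apply dsin0 | apply dmsin0 | apply dl_const].
Qed.

Lemma Wof_orth Psi X R : mat_eq (mmul R (mtr R)) idm -> Wof Psi (mmul X R) = Wof Psi X.
Proof.
  intros H. unfold Wof. rewrite mtr_mmul, mmul_assoc, Wt_comm, !mmul_assoc.
  apply Wt_compat. eapply mat_eq_trans.
  - apply mmul_compat; [apply mat_eq_refl|]. apply mmul_compat; [apply mat_eq_refl|exact H].
  - apply mmul_compat; [apply mat_eq_refl|apply mmul_idm_r].
Qed.

Lemma madd_sub X R : mat_eq (madd X (mmul X (madd R (mscal (-1) idm)))) (mmul X R).
Proof. meq; unfold madd, mmul, mscal, idm; simpl; ring. Qed.

Lemma grad_sym Psi X G : is_gradient (Wof Psi) X G -> mat_eq (mtr (mmul (mtr X) G)) (mmul (mtr X) G).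
Proof.
  intros HG.
  assert (K : forall p q, (p = 0 /\ q = 1 \/ p = 0 /\ q = 2 \/ p = 1 /\ q = 2)%nat ->
     inner G (mmul X (Erot p q)) = 0).
  { intros p q Hpq.
    assert (D := grad_chain (Wof Psi) X G (Wof_compat Psi) HG
      (fun s => mmul X (madd (rot p q s) (mscal (-1) idm))) (mmul X (Erot p q)) 0
      (fun _ => Wof Psi X) 1 ltac:(lra)).
    eapply uniqueness_limite; [apply D| apply dl_const].
    - intros s _. rewrite (Wof_compat Psi _ _ (madd_sub X (rot p q s))).
      symmetry; apply Wof_orth, rot_orth; auto.
    - intros i j Hi Hj. unfold mmul, madd, mscal.
      pose proof (rot_orth p q 0 Hpq).
      destruct Hpq as [[-> ->]|[[-> ->]|[-> ->]]]; d3 i; d3 j; unfold rot, idm; simpl;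
      rewrite ?cos_0, ?sin_0; ring.
    - apply mderiv_lmul, mderiv_subI, rot_deriv; auto. }
  assert (K1 := K 0%nat 1%nat ltac:(auto)).
  assert (K2 := K 0%nat 2%nat ltac:(auto)).
  assert (K3 := K 1%nat 2%nat ltac:(auto)).
  rewrite inner_sum in K1, K2, K3. unfold mmul, Erot, mtr in K1, K2, K3; simpl in K1, K2, K3.
  meq; unfold mtr, mmul; simpl; try ring; lra.
Qed.

Lemma mcl A B C : mat_eq B C -> mat_eq (mmul A B) (mmul A C).
Proof. intros; apply mmul_compat; auto using mat_eq_refl. Qed.
Lemma mcr A B C : mat_eq B C -> mat_eq (mmul B A) (mmul C A).
Proof. intros; apply mmul_compat; auto using mat_eq_refl. Qed.

Lemma minv_unique X A : det3 A <> 0 -> mat_eq (mmul X A) idm -> mat_eq X (minv A).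
Proof.
  intros Hd H.
  eapply mat_eq_trans; [apply mat_eq_sym, mmul_idm_r|].
  eapply mat_eq_trans; [apply mcl, mat_eq_sym, (minv_r A Hd)|].
  rewrite <- mmul_assoc.
  eapply mat_eq_trans; [apply mcr, H|]. apply mmul_idm_l.
Qed.

Lemma minv_sq A : det3 A <> 0 -> mat_eq (mmul A (mmul (minv (mmul A A)) A)) idm.
Proof.
  intros Hd.
  assert (Hd2 : det3 (mmul A A) <> 0) by (rewrite det3_mul; apply Rmult_integral_contrapositive; auto).
  assert (E : mat_eq (mmul (minv (mmul A A)) A) (minv A)).
  { apply minv_unique; auto. rewrite mmul_assoc. apply minv_l; auto. }
  eapply mat_eq_trans; [apply mcl, E|]. apply minv_r; auto.
Qed.

Lemma inner_mul_r X A B : inner X (mmul A B) = inner (mmul (mtr A) X) B.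
Proof. rewrite !inner_sum; unfold mmul, mtr; ring. Qed.
Lemma inner_mul_r2 X A B : inner X (mmul A B) = inner (mmul X (mtr B)) A.
Proof. rewrite !inner_sum; unfold mmul, mtr; ring. Qed.
Lemma inner_mul_l X A B : inner (mmul A B) X = inner B (mmul (mtr A) X).
Proof. rewrite !inner_sum; unfold mmul, mtr; ring. Qed.
Lemma inner_mul_l2 X A B : inner (mmul A B) X = inner A (mmul X (mtr B)).
Proof. rewrite !inner_sum; unfold mmul, mtr; ring. Qed.
Lemma inner_tr X Y : inner X (mtr Y) = inner (mtr X) Y.
Proof. rewrite !inner_sum; unfold mtr; ring. Qed.
Lemma inner_madd X Y Z : inner X (madd Y Z) = inner X Y + inner X Z.
Proof. rewrite !inner_sum; unfold madd; ring. Qed.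
Lemma inner_scal X a Y : inner X (mscal a Y) = a * inner X Y.
Proof. rewrite !inner_sum; unfold mscal; ring. Qed.
Lemma inner_comm X Y : inner X Y = inner Y X.
Proof. rewrite !inner_sum; ring. Qed.

Lemma minv_sym A : symmetric A -> symmetric (minv A).
Proof.
  intros H. unfold symmetric in *. rewrite <- minv_tr. apply minv_compat; auto.
Qed.

Lemma qqt (Q N : Mat3) :
  Q 0%nat 1%nat = 0 -> Q 0%nat 2%nat = 0 -> Q 1%nat 2%nat = 0 -> symmetric N ->
  Q 0%nat 0%nat * Q 0%nat 0%nat = N 0%nat 0%nat ->
  Q 1%nat 0%nat * Q 0%nat 0%nat = N 1%nat 0%nat ->
  Q 1%nat 0%nat * Q 1%nat 0%nat + Q 1%nat 1%nat * Q 1%nat 1%nat = N 1%nat 1%nat ->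
  Q 2%nat 0%nat * Q 0%nat 0%nat = N 2%nat 0%nat ->
  Q 2%nat 0%nat * Q 1%nat 0%nat + Q 2%nat 1%nat * Q 1%nat 1%nat = N 2%nat 1%nat ->
  Q 2%nat 0%nat * Q 2%nat 0%nat + Q 2%nat 1%nat * Q 2%nat 1%nat + Q 2%nat 2%nat * Q 2%nat 2%nat = N 2%nat 2%nat ->
  mat_eq (mmul Q (mtr Q)) N.
Proof.
  intros Z1 Z2 Z3 S E1 E2 E3 E4 E5 E6.
  assert (S1 := S 0%nat 1%nat ltac:(lia) ltac:(lia)).
  assert (S2 := S 0%nat 2%nat ltac:(lia) ltac:(lia)).
  assert (S3 := S 1%nat 2%nat ltac:(lia) ltac:(lia)).
  unfold mtr in S1, S2, S3.
  meq; unfold mmul, mtr; rewrite ?Z1, ?Z2, ?Z3; nra.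
Qed.

Lemma cancel_l A B X : mat_eq (mmul A B) idm -> mat_eq (mmul A (mmul B X)) X.
Proof. intros H. rewrite <- mmul_assoc. eapply mat_eq_trans; [apply mcr, H|apply mmul_idm_l]. Qed.
Lemma cancel_r A B X : mat_eq (mmul A B) idm -> mat_eq (mmul (mmul X A) B) X.
Proof. intros H. rewrite mmul_assoc. eapply mat_eq_trans; [apply mcl, H|apply mmul_idm_r]. Qed.

Lemma part1 Psi F (HF : 0 < det3 F) Cp (HCp : forall t, psym (Cp t)) Fp0 (HFp0 : psym Fp0) t
  (HFpt : mat_eq (mmul Fp0 Fp0) (Cp t)) D (HD : mderiv_at (fun s => minv (Cp s)) t D)
  G (HG : is_gradient (Wof Psi) (mmul F (minv Fp0)) G) :
  derivable_pt_lim (fun s => Wt Psi (mmul (mmul (mtr F) F) (minv (Cp s)))) t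
   (/ 2 * inner (mmul G (mtr (mmul F (minv Fp0))))
      (mmul (mmul (mmul F D) (mtr F)) (minv (mmul (mmul F (minv Fp0)) (mtr (mmul F (minv Fp0))))))).
Proof.
  assert (dF : det3 F <> 0) by lra.
  assert (dFp : det3 Fp0 <> 0) by (apply psym_det; auto).
  assert (sFp : symmetric Fp0) by apply HFp0.
  set (iFp := minv Fp0).
  assert (sIFp : symmetric iFp) by (apply minv_sym; auto).
  set (Fe := mmul F iFp).
  set (P := fun s => minv (Cp s)).
  set (N := fun s => mmul (mmul Fp0 (P s)) Fp0).
  set (Nd := mmul (mmul Fp0 D) Fp0).
  assert (HN : mderiv_at N t Nd) by (apply mderiv_rmul, mderiv_lmul, HD).
  assert (Nt : mat_eq (N t) idm).
  { unfold N, P. rewrite mmul_assoc.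
    eapply mat_eq_trans; [apply mcl, mcr, minv_compat, mat_eq_sym, HFpt|].
    apply minv_sq; auto. }
  assert (sP : forall s, symmetric (P s)) by (intros; apply minv_sym, HCp).
  assert (sN : forall s, symmetric (N s)).
  { intros s. unfold symmetric, N. rewrite !mtr_mmul, mmul_assoc.
    eapply mat_eq_trans; [apply mcl, mcr, sP|].
    eapply mat_eq_trans; [apply mcl, mcl, sFp|]. apply mcr, sFp. }
  assert (sD : symmetric D).
  { intros i j Hi Hj. unfold mtr.
    eapply uniqueness_limite; [apply HD; auto|].
    eapply derivable_pt_lim_ext; [|apply (HD i j Hi Hj)].
    intros z. apply (sP z); auto. }
  assert (sNd : symmetric Nd).
  { unfold symmetric, Nd. rewrite !mtr_mmul, mmul_assoc.
    eapply mat_eq_trans; [apply mcl, mcr, sD|].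
    eapply mat_eq_trans; [apply mcl, mcl, sFp|]. apply mcr, sFp. }
  assert (C0 := chol (fun s => N s 0%nat 0%nat) (fun s => N s 1%nat 0%nat) (fun s => N s 1%nat 1%nat)
     (fun s => N s 2%nat 0%nat) (fun s => N s 2%nat 1%nat) (fun s => N s 2%nat 2%nat) t
     (Nd 0%nat 0%nat) (Nd 1%nat 0%nat) (Nd 1%nat 1%nat) (Nd 2%nat 0%nat) (Nd 2%nat 1%nat) (Nd 2%nat 2%nat)
     (HN 0%nat 0%nat ltac:(lia) ltac:(lia)) (HN 1%nat 0%nat ltac:(lia) ltac:(lia)) (HN 1%nat 1%nat ltac:(lia) ltac:(lia)) (HN 2%nat 0%nat ltac:(lia) ltac:(lia)) (HN 2%nat 1%nat ltac:(lia) ltac:(lia)) (HN 2%nat 2%nat ltac:(lia) ltac:(lia))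
     (Nt 0%nat 0%nat ltac:(lia) ltac:(lia)) (Nt 1%nat 0%nat ltac:(lia) ltac:(lia)) (Nt 1%nat 1%nat ltac:(lia) ltac:(lia)) (Nt 2%nat 0%nat ltac:(lia) ltac:(lia)) (Nt 2%nat 1%nat ltac:(lia) ltac:(lia)) (Nt 2%nat 2%nat ltac:(lia) ltac:(lia))).
  simpl in C0.
  set (Q := chQ (fun s => N s 0%nat 0%nat) (fun s => N s 1%nat 0%nat) (fun s => N s 1%nat 1%nat)
     (fun s => N s 2%nat 0%nat) (fun s => N s 2%nat 1%nat) (fun s => N s 2%nat 2%nat)) in C0.
  set (Qd := chD (Nd 0%nat 0%nat) (Nd 1%nat 0%nat) (Nd 1%nat 1%nat) (Nd 2%nat 0%nat) (Nd 2%nat 1%nat) (Nd 2%nat 2%nat)) in C0.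
  destruct C0 as [[d0 [Hd0 HQ]] [Qt HQd]].
  assert (QQ : forall s, Rabs (s - t) < d0 -> mat_eq (mmul (Q s) (mtr (Q s))) (N s)).
  { intros s Hs. destruct (HQ s Hs) as (E1 & E2 & E3 & E4 & E5 & E6).
    apply qqt; auto. }
  assert (iFpFp : mat_eq (mmul iFp Fp0) idm) by (apply minv_l; auto).
  assert (FpiFp : mat_eq (mmul Fp0 iFp) idm) by (apply minv_r; auto).
  assert (FpiFpT : mat_eq (mmul Fp0 (mtr iFp)) idm) by (eapply mat_eq_trans; [apply mcl, sIFp|auto]).
  assert (Hgeq : forall s, Rabs (s - t) < d0 ->
     Wt Psi (mmul (mmul (mtr F) F) (minv (Cp s))) =
     Wof Psi (madd Fe (mmul Fe (madd (Q s) (mscal (-1) idm))))).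
  { intros s Hs. rewrite (Wof_compat _ _ _ (madd_sub Fe (Q s))). unfold Wof. rewrite (Wt_comm Psi (mtr (mmul Fe (Q s)))).
    transitivity (Wt Psi (mmul F (mmul (P s) (mtr F)))).
    { change (minv (Cp s)) with (P s).
      rewrite (Wt_comm Psi (mmul (mtr F) F) (P s)), <- mmul_assoc, Wt_comm. reflexivity. }
    apply Wt_compat. apply mat_eq_sym.
    rewrite mtr_mmul, mmul_assoc, <- (mmul_assoc (Q s)).
    eapply mat_eq_trans; [apply mcl, mcr, QQ, Hs|].
    unfold Fe, N. rewrite !mtr_mmul, !mmul_assoc. apply mcl.
    eapply mat_eq_trans; [apply cancel_l, iFpFp|]. apply mcl.
    apply cancel_l; auto. }
  assert (HHt : mat_eq (mmul Fe (madd (Q t) (mscal (-1) idm))) (fun _ _ => 0)).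
  { intros i j Hi Hj. unfold mmul, madd, mscal. rewrite !Qt by lia. unfold idm; simpl. ring. }
  assert (Dg := grad_chain (Wof Psi) Fe G (Wof_compat Psi) HG
     (fun s => mmul Fe (madd (Q s) (mscal (-1) idm))) (mmul Fe Qd) t _ d0 Hd0 Hgeq HHt
     (mderiv_lmul _ _ _ _ (mderiv_subI _ _ _ HQd))).
  apply (dl_eqv _ _ _ _ Dg).
  change (mmul F (minv Fp0)) with Fe.
  set (S := mmul (mtr Fe) G).
  assert (sS : symmetric S) by (apply (grad_sym Psi); exact HG).
  assert (QdNd : mat_eq (madd Qd (mtr Qd)) Nd).
  { assert (S1 := sNd 0%nat 1%nat ltac:(lia) ltac:(lia)).
    assert (S2 := sNd 0%nat 2%nat ltac:(lia) ltac:(lia)).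
    assert (S3 := sNd 1%nat 2%nat ltac:(lia) ltac:(lia)).
    unfold mtr in S1, S2, S3.
    meq; unfold Qd, chD, madd, mtr; simpl; lra. }
  assert (E1 : inner G (mmul Fe Qd) = / 2 * inner S Nd).
  { rewrite <- (inner_compat _ _ _ _ (mat_eq_refl S) QdNd), inner_madd, inner_tr,
      (inner_compat _ _ _ _ sS (mat_eq_refl Qd)), inner_mul_r. fold S. field. }
  rewrite E1. f_equal.
  assert (dIFp : det3 iFp <> 0) by (unfold iFp; rewrite det3_minv by auto; apply Rinv_neq_0_compat; auto).
  assert (dFe : det3 Fe <> 0) by (unfold Fe; rewrite det3_mul; apply Rmult_integral_contrapositive; auto).
  assert (dFeT : det3 (mtr Fe) <> 0) by (rewrite det3_tr; auto).
  assert (dFT : det3 (mtr F) <> 0) by (rewrite det3_tr; auto).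
  assert (dBe : det3 (mmul Fe (mtr Fe)) <> 0) by (rewrite det3_mul; apply Rmult_integral_contrapositive; auto).
  assert (W1 : mat_eq (mmul (minv (mmul Fe (mtr Fe))) Fe) (minv (mtr Fe))).
  { apply minv_unique; auto. rewrite mmul_assoc. apply minv_l; auto. }
  assert (W2 : mat_eq (mmul (minv (mtr F)) Fp0) (minv (mtr Fe))).
  { apply minv_unique; auto. unfold Fe. rewrite mtr_mmul, !mmul_assoc.
    eapply mat_eq_trans; [apply mcl, cancel_l, FpiFpT|]. apply minv_l; auto. }
  assert (Y : mat_eq (mmul (mtr F) (mmul (minv (mmul Fe (mtr Fe))) Fe)) Fp0).
  { eapply mat_eq_trans; [apply mcl, (mat_eq_trans _ _ _ W1), mat_eq_sym, W2|].
    apply cancel_l, minv_r; auto. }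
  transitivity (inner G (mmul F (mmul D Fp0))).
  - unfold S, Nd. unfold Fe at 1. rewrite mtr_mmul, inner_mul_l, !mtr_mmul, !mtr_mtr, !mmul_assoc.
    apply inner_compat; [apply mat_eq_refl|]. apply mcl, cancel_l, iFpFp.
  - rewrite inner_mul_l2, mtr_mtr, !mmul_assoc.
    apply inner_compat; [apply mat_eq_refl|]. apply mcl, mcl, mat_eq_sym, Y.
Qed.

Lemma mmul_scal_l c A B : mmul (mscal c A) B = mscal c (mmul A B).
Proof. fext; unfold mmul, mscal; ring. Qed.
Lemma mmul_scal_r c A B : mmul A (mscal c B) = mscal c (mmul A B).
Proof. fext; unfold mmul, mscal; ring. Qed.
Lemma mscal_mscal a b A : mscal a (mscal b A) = mscal (a * b) A.
Proof. fext; unfold mscal; ring. Qed.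
Lemma inner_dev X : inner X (dev3 X) = inner (dev3 X) (dev3 X).
Proof. rewrite !inner_sum; unfold dev3, madd, mscal, idm, trace; simpl; field. Qed.
Lemma inner_pos X : ~ mat_eq X (fun _ _ => 0) -> 0 < inner X X.
Proof.
  intros H. destruct (Rlt_or_le 0 (inner X X)) as [h|h]; auto. exfalso; apply H.
  rewrite inner_sum in h.
  assert (forall x, 0 <= x * x) by (intros; nra).
  meq; nra.
Qed.

Theorem mainTheorem12
  (Psi : R -> R -> R -> R) (HPsi : C1_pos Psi)
  (F : Mat3) (HF : 0 < det3 F)
  (Cp : R -> Mat3) (HCp : forall t, psym (Cp t)) (HCpd : mdifferentiable Cp)
  (Fp : R -> Mat3) (HFp : forall t, psym (Fp t) /\ mat_eq (mmul (Fp t) (Fp t)) (Cp t))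
  (dCpinv : R -> Mat3) (HdCpinv : forall t, mderiv_at (fun s => minv (Cp s)) t (dCpinv t))
  (DWe : R -> Mat3)
  (HDWe : forall t, is_gradient (Wof Psi) (mmul F (minv (Fp t))) (DWe t)) :
  let Fe := fun t => mmul F (minv (Fp t)) in
  let Be := fun t => mmul (Fe t) (mtr (Fe t)) in
  let taue := fun t => mmul (DWe t) (mtr (Fe t)) in
  let C := mmul (mtr F) F in
  (forall t,
     derivable_pt_lim (fun s => Wt Psi (mmul C (minv (Cp s)))) t
       (/ 2 * inner (taue t) (mmul (mmul (mmul F (dCpinv t)) (mtr F)) (minv (Be t))))) /\
  (forall t lambda,
     ~ mat_eq (dev3 (taue t)) (fun _ _ => 0) ->
     0 <= lambda ->
     mat_eq (dCpinv t)
       (mscal (-2 * lambda)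
          (mmul (mmul (minv F)
                      (mmul (mscal (/ fnorm (dev3 (taue t))) (dev3 (taue t))) (Be t)))
                (mtr (minv F)))) ->
     derivable_pt_lim (fun s => Wt Psi (mmul C (minv (Cp s)))) t
       (- lambda * fnorm (dev3 (taue t))) /\
     - lambda * fnorm (dev3 (taue t)) <= 0).
Proof.
  intros Fe Be taue C.
  assert (P1 : forall t,
     derivable_pt_lim (fun s => Wt Psi (mmul C (minv (Cp s)))) t
       (/ 2 * inner (taue t) (mmul (mmul (mmul F (dCpinv t)) (mtr F)) (minv (Be t))))).
  { intros t. destruct (HFp t) as [H1 H2].
    exact (part1 Psi F HF Cp HCp (Fp t) H1 t H2 (dCpinv t) (HdCpinv t) (DWe t) (HDWe t)). }
  split; auto.
  intros t lambda Hdev Hl HD.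
  set (d := dev3 (taue t)).
  fold d in Hdev, HD.
  assert (Hx : 0 < inner d d) by (apply inner_pos; auto).
  assert (Hs : 0 < fnorm d) by (unfold fnorm; apply sqrt_lt_R0; auto).
  assert (Hsq : fnorm d * fnorm d = inner d d) by (unfold fnorm; apply sqrt_sqrt; lra).
  assert (dF : det3 F <> 0) by lra.
  destruct (HFp t) as [HFp1 _].
  assert (dFp : det3 (Fp t) <> 0) by (apply psym_det; auto).
  assert (dFe : det3 (Fe t) <> 0).
  { unfold Fe; rewrite det3_mul, det3_minv by auto.
    apply Rmult_integral_contrapositive; split; auto. apply Rinv_neq_0_compat; auto. }
  assert (dBe : det3 (Be t) <> 0)
    by (unfold Be; rewrite det3_mul, det3_tr; apply Rmult_integral_contrapositive; auto).
  assert (V : mat_eq (mmul (mmul (mmul F (dCpinv t)) (mtr F)) (minv (Be t)))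
                     (mscal (-2 * lambda) (mscal (/ fnorm d) d))).
  { eapply mat_eq_trans; [apply mcr, mcr, mcl, HD|].
    repeat first [rewrite mmul_scal_l | rewrite mmul_scal_r].
    rewrite !mscal_mscal. apply mscal_compat.
    rewrite !mmul_assoc.
    eapply mat_eq_trans; [apply cancel_l, minv_r; auto|].
    eapply mat_eq_trans; [apply mcl, mcl, cancel_l|].
    - rewrite <- mtr_mmul, <- mtr_idm. apply mtr_compat, minv_r; auto.
    - eapply mat_eq_trans; [apply mcl, minv_r; auto|]. apply mmul_idm_r. }
  assert (Val : / 2 * inner (taue t) (mmul (mmul (mmul F (dCpinv t)) (mtr F)) (minv (Be t)))
                = - lambda * fnorm d).
  { rewrite (inner_compat _ _ _ _ (mat_eq_refl _) V), !inner_scal.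
    unfold d. rewrite inner_dev. fold d. rewrite <- Hsq. field. lra. }
  split.
  - rewrite <- Val. apply P1.
  - nra.
Qed.
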